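(* Let $\mathcal{W}$ be a weakly exact structure on an additive category $\mathcal{A}$. (1) If $A\xrightarrow{i}B\xrightarrow{j}C$ are morphisms in $\mathcal{A}$ such that $i$ has a cokernel and $ji$ is an admissible monic of $\mathcal{W}$, then $i$ is an admissible monic of $\mathcal{W}$. (2) If $X\xrightarrow{f}Y\xrightarrow{g}Z$ are morphisms in $\mathcal{A}$ such that $g$ has a kernel and $gf$ is an admissible epic of $\mathcal{W}$, then $g$ is an admissible epic of $\mathcal{W}$.
   Context: Let $\mathcal{A}$ be an additive category. A kernel-cokernel pair (short exact sequence) is a pair of composable morphisms $A\xrightarrow{i}B\xrightarrow{d}C$ with $i$ a kernel of $d$ and $d$ a cokernel of $i$. A weakly exact structure on $\mathcal{A}$ is a class $\mathcal{W}$ of kernel-cokernel pairs, closed under isomorphisms of sequences and under finite direct sums of sequences, such that, calling $i$ an admissible monic (resp. $d$ an admissible epic) if $(i,d)\in\mathcal{W}$ for some $d$ (resp. some $i$): (E0) $1_A$ is an admissible monic for every object $A$; (E0)$^{op}$ $1_A$ is an admissible epic for every object $A$; (E2) for every admissible monic $i:A\to B$ and every morphism $t:A\to C$ the pushout of $i$ along $t$ exists and the resulting morphism $C\to S$ is an admissible monic; (E2)$^{op}$ for every admissible epic $h:A\to C$ and every morphism $t:B\to C$ the pullback of $h$ along $t$ exists and the resulting morphism $P\to B$ is an admissible epic. *)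

(* Defs.v *)
From HB Require Import structures.
From mathcomp Require Import all_boot all_algebra.
Set Implicit Arguments. Unset Strict Implicit. Unset Printing Implicit Defensive.
Import GRing.Theory.
Local Open Scope ring_scope.

Record PreAdd := {
  Obj :> Type;
  Mor : Obj -> Obj -> zmodType;
  mcomp : forall A B C : Obj, Mor B C -> Mor A B -> Mor A C;
  idm : forall A : Obj, Mor A A;
  compA : forall (A B C D : Obj) (h : Mor C D) (g : Mor B C) (f : Mor A B),
      mcomp h (mcomp g f) = mcomp (mcomp h g) f;
  comp1m : forall (A B : Obj) (f : Mor A B), mcomp (idm B) f = f;
  compm1 : forall (A B : Obj) (f : Mor A B), mcomp f (idm A) = f;
  compDl : forall (A B C : Obj) (g1 g2 : Mor B C) (f : Mor A B),
      mcomp (g1 + g2) f = mcomp g1 f + mcomp g2 f;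
  compDr : forall (A B C : Obj) (g : Mor B C) (f1 f2 : Mor A B),
      mcomp g (f1 + f2) = mcomp g f1 + mcomp g f2
}.
Arguments mcomp {p A B C}.
Arguments idm {p}.

Section Defs.
Variable C : PreAdd.

Definition is_zero_obj (Z : C) : Prop :=
  forall X : C, (forall f g : Mor X Z, f = g) /\ (forall f g : Mor Z X, f = g).

Definition is_biprod (A1 A2 S : C) (e1 : Mor A1 S) (e2 : Mor A2 S)
    (p1 : Mor S A1) (p2 : Mor S A2) : Prop :=
  [/\ mcomp p1 e1 = idm A1, mcomp p2 e2 = idm A2, mcomp p1 e2 = 0, mcomp p2 e1 = 0
    & mcomp e1 p1 + mcomp e2 p2 = idm S].

Definition is_additive : Prop :=
  (exists Z : C, is_zero_obj Z) /\
  (forall A1 A2 : C, exists (S : C) (e1 : Mor A1 S) (e2 : Mor A2 S)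
      (p1 : Mor S A1) (p2 : Mor S A2), is_biprod e1 e2 p1 p2).

Definition is_kernel (A B D : C) (i : Mor A B) (d : Mor B D) : Prop :=
  mcomp d i = 0 /\
  forall (X : C) (t : Mor X B), mcomp d t = 0 -> exists! u : Mor X A, mcomp i u = t.

Definition is_cokernel (A B D : C) (i : Mor A B) (d : Mor B D) : Prop :=
  mcomp d i = 0 /\
  forall (X : C) (t : Mor B X), mcomp t i = 0 -> exists! u : Mor D X, mcomp u d = t.

Definition has_kernel (B D : C) (d : Mor B D) : Prop :=
  exists (A : C) (i : Mor A B), is_kernel i d.

Definition has_cokernel (A B : C) (i : Mor A B) : Prop :=
  exists (D : C) (d : Mor B D), is_cokernel i d.

Definition kc_pair (A B D : C) (i : Mor A B) (d : Mor B D) : Prop :=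
  is_kernel i d /\ is_cokernel i d.

Definition is_iso (A B : C) (f : Mor A B) : Prop :=
  exists g : Mor B A, mcomp g f = idm A /\ mcomp f g = idm B.

Definition SeqClass := forall A B D : C, Mor A B -> Mor B D -> Prop.

Definition adm_monic (W : SeqClass) (A B : C) (i : Mor A B) : Prop :=
  exists (D : C) (d : Mor B D), W A B D i d.

Definition adm_epic (W : SeqClass) (B D : C) (d : Mor B D) : Prop :=
  exists (A : C) (i : Mor A B), W A B D i d.

Definition dsum_mor (A1 A2 SA B1 B2 SB : C)
    (pA1 : Mor SA A1) (pA2 : Mor SA A2) (eB1 : Mor B1 SB) (eB2 : Mor B2 SB)
    (f : Mor A1 B1) (g : Mor A2 B2) : Mor SA SB :=
  mcomp eB1 (mcomp f pA1) + mcomp eB2 (mcomp g pA2).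

Definition is_pushout (A B D S : C) (i : Mor A B) (t : Mor A D)
    (s : Mor B S) (j : Mor D S) : Prop :=
  mcomp s i = mcomp j t /\
  forall (X : C) (u : Mor B X) (v : Mor D X), mcomp u i = mcomp v t ->
    exists! w : Mor S X, mcomp w s = u /\ mcomp w j = v.

Definition is_pullback (A B D P : C) (h : Mor A D) (t : Mor B D)
    (q : Mor P A) (k : Mor P B) : Prop :=
  mcomp h q = mcomp t k /\
  forall (X : C) (u : Mor X A) (v : Mor X B), mcomp h u = mcomp t v ->
    exists! w : Mor X P, mcomp q w = u /\ mcomp k w = v.

Definition weakly_exact (W : SeqClass) : Prop :=
  (forall (A B D : C) (i : Mor A B) (d : Mor B D), W A B D i d -> kc_pair i d) /\
  (forall (A B D A' B' D' : C) (i : Mor A B) (d : Mor B D)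
      (i' : Mor A' B') (d' : Mor B' D') (a : Mor A A') (b : Mor B B') (c : Mor D D'),
      W A B D i d -> is_iso a -> is_iso b -> is_iso c ->
      mcomp b i = mcomp i' a -> mcomp c d = mcomp d' b -> W A' B' D' i' d') /\
  (forall (A1 B1 D1 A2 B2 D2 SA SB SD : C)
      (i1 : Mor A1 B1) (d1 : Mor B1 D1) (i2 : Mor A2 B2) (d2 : Mor B2 D2)
      (eA1 : Mor A1 SA) (eA2 : Mor A2 SA) (pA1 : Mor SA A1) (pA2 : Mor SA A2)
      (eB1 : Mor B1 SB) (eB2 : Mor B2 SB) (pB1 : Mor SB B1) (pB2 : Mor SB B2)
      (eD1 : Mor D1 SD) (eD2 : Mor D2 SD) (pD1 : Mor SD D1) (pD2 : Mor SD D2),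
      W A1 B1 D1 i1 d1 -> W A2 B2 D2 i2 d2 ->
      is_biprod eA1 eA2 pA1 pA2 -> is_biprod eB1 eB2 pB1 pB2 ->
      is_biprod eD1 eD2 pD1 pD2 ->
      W SA SB SD (dsum_mor pA1 pA2 eB1 eB2 i1 i2) (dsum_mor pB1 pB2 eD1 eD2 d1 d2)) /\
  (forall A : C, adm_monic W (idm A)) /\
  (forall A : C, adm_epic W (idm A)) /\
  (forall (A B D : C) (i : Mor A B) (t : Mor A D), adm_monic W i ->
      exists (S : C) (s : Mor B S) (j : Mor D S), is_pushout i t s j /\ adm_monic W j) /\
  (forall (A B D : C) (h : Mor A D) (t : Mor B D), adm_epic W h ->
      exists (P : C) (q : Mor P A) (k : Mor P B), is_pullback h t q k /\ adm_epic W k).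

End Defs.

(* Main.v *)
Require Import Defs.
From mathcomp Require Import all_boot all_algebra.
Import GRing.Theory.
Local Open Scope ring_scope.
Local Notation cA := Defs.compA.
Local Notation cDl := Defs.compDl.
Local Notation cDr := Defs.compDr.

Lemma comp0l (C : PreAdd) (A B D : C) (f : Mor A B) : mcomp (0 : Mor B D) f = 0.
Proof.
have := cDl (0 : Mor B D) 0 f; rewrite addr0 => H.
by move: (congr1 (fun x => x - mcomp (0 : Mor B D) f) H); rewrite addrK subrr.
Qed.

Lemma comp0r (C : PreAdd) (A B D : C) (g : Mor B D) : mcomp g (0 : Mor A B) = 0.
Proof.
have := cDr g (0 : Mor A B) 0; rewrite addr0 => H.
by move: (congr1 (fun x => x - mcomp g (0 : Mor A B)) H); rewrite addrK subrr.
Qed.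

Lemma compNl (C : PreAdd) (A B D : C) (g : Mor B D) (f : Mor A B) :
  mcomp (- g) f = - mcomp g f.
Proof.
have := cDl g (- g) f; rewrite subrr comp0l => H.
by apply: (addrI (mcomp g f)); rewrite -H subrr.
Qed.

Lemma compNr (C : PreAdd) (A B D : C) (g : Mor B D) (f : Mor A B) :
  mcomp g (- f) = - mcomp g f.
Proof.
have := cDr g f (- f); rewrite subrr comp0r => H.
by apply: (addrI (mcomp g f)); rewrite -H subrr.
Qed.

Lemma compBl (C : PreAdd) (A B D : C) (g1 g2 : Mor B D) (f : Mor A B) :
  mcomp (g1 - g2) f = mcomp g1 f - mcomp g2 f.
Proof. by rewrite cDl compNl. Qed.

Lemma compBr (C : PreAdd) (A B D : C) (g : Mor B D) (f1 f2 : Mor A B) :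
  mcomp g (f1 - f2) = mcomp g f1 - mcomp g f2.
Proof. by rewrite cDr compNr. Qed.

Lemma kernel_mono (C : PreAdd) (A B D : C) (i : Mor A B) (d : Mor B D) :
  is_kernel i d -> forall (X : C) (u1 u2 : Mor X A), mcomp i u1 = mcomp i u2 -> u1 = u2.
Proof.
move=> [di H] X u1 u2 e.
have t0 : mcomp d (mcomp i u1) = 0 by rewrite cA di comp0l.
case: (H X _ t0) => u [_ Hu].
by rewrite -(Hu u1 erefl) (Hu u2 (esym e)).
Qed.

Lemma coker_epi (C : PreAdd) (A B D : C) (i : Mor A B) (d : Mor B D) :
  is_cokernel i d -> forall (X : C) (u1 u2 : Mor D X), mcomp u1 d = mcomp u2 d -> u1 = u2.
Proof.
move=> [di H] X u1 u2 e.
have t0 : mcomp (mcomp u1 d) i = 0 by rewrite -cA di comp0r.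
case: (H X _ t0) => u [_ Hu].
by rewrite -(Hu u1 erefl) (Hu u2 (esym e)).
Qed.

Lemma pb_uniq (C : PreAdd) (A B D P : C) (h : Mor A D) (t : Mor B D)
    (q : Mor P A) (k : Mor P B) : is_pullback h t q k ->
  forall (X : C) (w1 w2 : Mor X P), mcomp q w1 = mcomp q w2 -> mcomp k w1 = mcomp k w2 ->
  w1 = w2.
Proof.
move=> [hq H] X w1 w2 e1 e2.
have t0 : mcomp h (mcomp q w1) = mcomp t (mcomp k w1) by rewrite !cA hq.
case: (H X _ _ t0) => w [_ Hw].
by rewrite -(Hw w1 (conj erefl erefl)) (Hw w2 (conj (esym e1) (esym e2))).
Qed.
Arguments kernel_mono {C A B D i d}.
Arguments coker_epi {C A B D i d}.
Arguments pb_uniq {C A B D P h t q k}.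
Arguments comp0l {C A B D}.
Arguments comp0r {C A B D}.
Arguments compNl {C A B D}.
Arguments compNr {C A B D}.
Arguments compBl {C A B D}.
Arguments compBr {C A B D}.

Lemma part1 (C : PreAdd) (W : SeqClass C)
  (Hkc : forall (A B D : C) (i : Mor A B) (d : Mor B D), W A B D i d -> kc_pair i d)
  (Hiso : forall (A B D A' B' D' : C) (i : Mor A B) (d : Mor B D)
      (i' : Mor A' B') (d' : Mor B' D') (a : Mor A A') (b : Mor B B') (c : Mor D D'),
      W A B D i d -> is_iso a -> is_iso b -> is_iso c ->
      mcomp b i = mcomp i' a -> mcomp c d = mcomp d' b -> W A' B' D' i' d')
  (HE2 : forall (A B D : C) (i : Mor A B) (t : Mor A D), adm_monic W i ->
      exists (S : C) (s : Mor B S) (j : Mor D S), is_pushout i t s j /\ adm_monic W j)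
  (HE2op : forall (A B D : C) (h : Mor A D) (t : Mor B D), adm_epic W h ->
      exists (P : C) (q : Mor P A) (k : Mor P B), is_pullback h t q k /\ adm_epic W k) :
  forall (A B D : C) (i : Mor A B) (j : Mor B D),
      has_cokernel i -> adm_monic W (mcomp j i) -> adm_monic W i.
Proof.
move=> A B Cc i j [Q [d [di Hd]]] [E [e We]].
have [[em Hm] [em' He]] := Hkc _ _ _ _ _ We.
have [S [s [n [[sn Hpo] [T [c Wn]]]]]] := HE2 _ _ _ (mcomp j i) i (ex_intro _ E (ex_intro _ e We)).
have [[cn Hn] [cn' Hc]] := Hkc _ _ _ _ _ Wn.
have [rho [[rs rn] _]] : exists! rho : Mor S Cc, mcomp rho s = idm Cc /\ mcomp rho n = j.
  by apply: Hpo; rewrite comp1m.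
have [sig [[ss sn'] _]] : exists! sg : Mor S Q, mcomp sg s = 0 /\ mcomp sg n = d.
  by apply: Hpo; rewrite comp0l di.
have [tau [td _]] : exists! t : Mor Q S, mcomp t d = n - mcomp s j.
  by apply: Hd; rewrite compBl -cA sn subrr.
have d_epi := coker_epi (conj di Hd).
have rt : mcomp rho tau = 0.
  by apply: d_epi; rewrite -cA td compBr rn cA rs comp1m subrr comp0l.
have st : mcomp sig tau = idm Q.
  by apply: d_epi; rewrite -cA td compBr sn' cA ss comp0l subr0 comp1m.
have n_mono := kernel_mono (conj cn Hn).
have jm : forall X (b : Mor X B), mcomp j b = 0 -> mcomp d b = 0 -> b = 0.
  move=> X b jb db; apply: n_mono; rewrite comp0r.
  have -> : n = mcomp tau d + mcomp s j by rewrite td subrK.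
  by rewrite cDl -!cA db jb !comp0r addr0.
have [g [gd _]] : exists! g : Mor Q E, mcomp g d = mcomp e j.
  by apply: Hd; rewrite -cA em.
have ik : is_kernel i d.
  split=> // X t dt.
  have et : mcomp e (mcomp j t) = 0 by rewrite cA -gd -cA dt comp0r.
  have [u [ju uu]] := Hm X _ et.
  exists u; split.
    apply/eqP; rewrite -subr_eq0; apply/eqP; apply: jm.
      by rewrite compBr cA ju subrr.
    by rewrite compBr cA di comp0l dt subrr.
  by move=> u' iu'; apply: uu; rewrite -cA iu'.
have i_mono := kernel_mono ik.
have [P [q [k [[eqk Hpb] [K [ka Wk]]]]]] := HE2op _ _ _ e g (ex_intro _ _ (ex_intro _ _ We)).
have [[kk Hk] _] := Hkc _ _ _ _ _ Wk.
have [beta [[qb kb] _]] : exists! b : Mor B P, mcomp q b = j /\ mcomp k b = d.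
  by apply: Hpb; rewrite gd.
have [h [he _]] : exists! h : Mor E T, mcomp h e = mcomp c s.
  by apply: He; rewrite -cA sn cA cn comp0l.
have ct : mcomp c tau = - mcomp h g.
  apply: d_epi.
  by rewrite compNl -!cA td gd compBr cn sub0r !cA he.
have ci : mcomp c (mcomp s q + mcomp tau k) = 0.
  by rewrite cDr !cA ct -he compNl -!cA eqk subrr.
have [gam [ng _]] := Hn P _ ci.
have ib : mcomp (mcomp s q + mcomp tau k) beta = n.
  by rewrite cDl -!cA qb kb td addrC subrK.
have gb : mcomp gam beta = idm B.
  by apply: n_mono; rewrite compm1 cA ng ib.
have iota_mono : forall X (p : Mor X P), mcomp (mcomp s q + mcomp tau k) p = 0 -> p = 0.
  move=> X p H.
  have qp : mcomp q p = 0.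
    by move: (congr1 (mcomp rho) H); rewrite comp0r cDl cDr !cA rs rt comp1m !comp0l addr0.
  have kp : mcomp k p = 0.
    by move: (congr1 (mcomp sig) H); rewrite comp0r cDl cDr !cA ss st comp1m !comp0l add0r.
  by apply: (pb_uniq (conj eqk Hpb)); rewrite comp0r.
have bg : mcomp beta gam = idm P.
  apply/eqP; rewrite -subr_eq0; apply/eqP; apply: iota_mono.
  by rewrite compBr cA ib ng compm1 subrr.
have dg : mcomp d gam = k by rewrite -kb -cA bg compm1.
have [a [ia _]] : exists! a : Mor K A, mcomp i a = mcomp gam ka.
  by apply: ik.2; rewrite cA dg kk.
have [a' [ka' _]] : exists! a' : Mor A K, mcomp ka a' = mcomp beta i.
  by apply: Hk; rewrite cA kb di.
have ka_mono := kernel_mono (conj kk Hk).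
have aa' : mcomp a a' = idm A.
  by apply: i_mono; rewrite compm1 cA ia -cA ka' cA gb comp1m.
have a'a : mcomp a' a = idm K.
  by apply: ka_mono; rewrite compm1 cA ka' -cA ia cA bg comp1m.
exists Q, d.
apply: (Hiso _ _ _ _ _ _ _ _ _ _ a gam (idm Q) Wk).
- by exists a'.
- by exists beta.
- by exists (idm Q); rewrite comp1m.
- by rewrite ia.
- by rewrite comp1m dg.
Qed.

Definition opp_cat (C : PreAdd) : PreAdd :=
  @Build_PreAdd (Obj C) (fun A B => Mor B A) (fun A B D g f => mcomp f g) (fun A => idm A)
   (fun A B D E h g f => esym (@Defs.compA C _ _ _ _ f g h))
   (fun A B f => @compm1 C _ _ f) (fun A B f => @comp1m C _ _ f)
   (fun A B D g1 g2 f => @Defs.compDr C _ _ _ f g1 g2)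
   (fun A B D g f1 f2 => @Defs.compDl C _ _ _ f1 f2 g).

Definition W_op (C : PreAdd) (W : SeqClass C) : SeqClass (opp_cat C) :=
  fun A B D i d => W D B A d i.
Arguments W_op {C}.

Lemma inv_l (C : PreAdd) (A B : C) (f : Mor A B) (g : Mor B A) (X : C) (u v : Mor X A) :
  mcomp g f = idm A -> mcomp f u = mcomp f v -> u = v.
Proof. by move=> gf e; rewrite -(comp1m u) -(comp1m v) -gf -!cA e. Qed.
Arguments inv_l {C A B f g X u v}.

Theorem mainTheorem3 (C : PreAdd) (HC : is_additive C) (W : SeqClass C)
    (HW : weakly_exact W) :
  (forall (A B D : C) (i : Mor A B) (j : Mor B D),
      has_cokernel i -> adm_monic W (mcomp j i) -> adm_monic W i) /\
  (forall (X Y Z : C) (f : Mor X Y) (g : Mor Y Z),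
      has_kernel g -> adm_epic W (mcomp g f) -> adm_epic W g).
Proof.
have [Hkc [Hiso [_ [_ [_ [HE2 HE2op]]]]]] := HW.
split; first exact: part1.
move=> X Y Z f g Hk He.
have := @part1 (opp_cat C) (W_op W).
apply.
- move=> A B D i d Wid; have [H1 H2] := Hkc _ _ _ _ _ Wid; by split.
- move=> A B D A' B' D' i d i' d' a b c Wid [ag [ag1 ag2]] [bg [bg1 bg2]] [cg [cg1 cg2]] e1 e2.
  rewrite /W_op in Wid *.
  simpl in *.
  apply: (Hiso _ _ _ _ _ _ d i d' i' cg bg ag Wid).
  + by exists c.
  + by exists b.
  + by exists a.
  + have -> : d = mcomp (mcomp d c) cg by rewrite -cA cg1 compm1.
    by rewrite e2 !cA bg2 comp1m.
  + have -> : i = mcomp (mcomp i b) bg by rewrite -cA bg1 compm1.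
    by rewrite e1 !cA ag2 comp1m.
- move=> A B D i t Hi; exact: HE2op.
- move=> A B D h t Hh; exact: HE2.
- exact: Hk.
- exact: He.
Qed.
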